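(* Let $\pi$ be an irreducible cuspidal representation of $G=GL_n(E)$ which is not distinguished with respect to $H=GL_n(F)$, i.e. $\mathrm{Hom}_H(\pi,\mathbb{1})=0$. Then for every function $\varphi:F^n\to\mathbb{C}$ (no condition on $\varphi(0)$) and every $W\in\mathcal{W}(\pi,\psi_E)$, \[ \gamma(\pi,\psi,As)\,Z(W,\varphi;\psi)=Z(\widetilde W,\mathcal{F}_\psi\varphi;\psi^{-1}). \]
   Context: $F=\mathbb{F}_q$, $E=\mathbb{F}_{q^2}$, $\theta(x)=x^q$; $\psi$ a nontrivial additive character of $F$, $\psi_E(x)=\psi\big(\frac{x-\theta(x)}{z-\theta(z)}\big)$ for a fixed $z\in E\setminus F$. $N_n$ is the upper triangular unipotent group, characters extended by $\psi_R(u)=\psi_R(\sum_iu_{i,i+1})$; $\mathcal{W}(\pi,\psi_E)$ is the Whittaker model. $Z(W,\varphi;\psi^{\pm1})=\sum_{g\in N_n(F)\backslash H}W(g)\varphi(e_ng)$ with $e_n=(0,\dots,0,1)$; $\widetilde W(g)=W(\omega_n{}^tg^{-1})$, $\omega_n$ the antidiagonal permutation matrix; $\mathcal{F}_\psi\varphi(y)=\sum_{x\in F^n}\varphi(x)\psi(\langle x,y\rangle)$. $\gamma(\pi,\psi,As)$ is the unique constant such that the displayed identity holds for all $W\in\mathcal{W}(\pi,\psi_E)$ and all $\varphi$ with $\varphi(0)=0$. *)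

(* Defs.v *)
From HB Require Import structures.
From mathcomp Require Import all_boot all_order all_algebra all_fingroup all_field all_character.
Set Implicit Arguments. Unset Strict Implicit. Unset Printing Implicit Defensive.
Import GRing.Theory Num.Theory.
Local Open Scope ring_scope.

(* E = F_{q^2} is a finite field E with #|E| = q^2; theta x = x^q; F is the
   fixed field of theta inside E, so F^n is the set of row vectors in E^n
   with all entries fixed by theta. The rank of GL is n.+1. *)

Section Defs.
Variables (E : finFieldType) (q : nat).

Definition theta (x : E) : E := x ^+ q.
Definition inF (x : E) : bool := theta x == x.
Definition inFvec m (x : 'rV[E]_m) : bool := [forall j, inF (x 0 j)].
Definition inFmx m (M : 'M[E]_m) : bool := [forall i, [forall j, inF (M i j)]].

Variables (psi : E -> algC) (z : E).

Definition psiE (x : E) : algC := psi ((x - theta x) / (z - theta z)).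

Variable n : nat.
Notation G := {'GL_n.+1[E]}.

(* a matrix viewed as an element of GL_{n+1}(E) (junk value 1 if singular) *)
Definition toGL (M : 'M[E]_n.+1) : G := insubd (1%g : G) M.

Definition upper_unipotent (M : 'M[E]_n.+1) : bool :=
  [forall i, [forall j, if i == j then M i j == 1
                        else (j < i)%N ==> (M i j == 0)]].

Definition superdiag_sum (M : 'M[E]_n.+1) : E :=
  \sum_(i < n) M (widen_ord (leqnSn n) i) (lift ord0 i).

Definition NF : {set G} :=
  [set g : G | upper_unipotent (GLval g) && inFmx (GLval g)].
Definition HF : {set G} := [set g : G | inFmx (GLval g)].

(* unipotent radical of the standard parabolic with block break points S *)
Definition same_block (S : {set 'I_n.+1}) (i j : 'I_n.+1) : bool :=
  [forall s in S, ~~ ((i < s)%N && (s <= j)%N)].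
Definition in_unip_radical (S : {set 'I_n.+1}) (M : 'M[E]_n.+1) : bool :=
  upper_unipotent M &&
  [forall i : 'I_n.+1, [forall j : 'I_n.+1, ((i < j)%N && same_block S i j) ==> (M i j == 0)]].
Definition proper_parabolic (S : {set 'I_n.+1}) : bool :=
  [exists s in S, (0 < s)%N].

Variables (d : nat) (rG : mx_representation algC [set: G]%G d).
(* pi(g) v := rG g *m v on column vectors v : 'cV_d *)

Definition cuspidal : Prop :=
  forall S : {set 'I_n.+1}, proper_parabolic S ->
  forall v : 'cV[algC]_d,
    (forall u : 'M[E]_n.+1, in_unip_radical S u -> rG (toGL u) *m v = v) ->
    v = 0.

Definition distinguished : Prop :=
  exists lam : 'rV[algC]_d, lam != 0 /\ forall h, h \in HF -> lam *m rG h = lam.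

Definition whittaker_functional (lam : 'rV[algC]_d) : Prop :=
  lam != 0 /\ forall u : 'M[E]_n.+1, upper_unipotent u ->
    lam *m rG (toGL u) = psiE (superdiag_sum u) *: lam.

Definition whittaker_model (W : 'M[E]_n.+1 -> algC) : Prop :=
  exists (lam : 'rV[algC]_d) (v : 'cV[algC]_d), whittaker_functional lam /\
    forall g, W g = (lam *m rG (toGL g) *m v) 0 0.

Definition omega : 'M[E]_n.+1 := \matrix_(i, j) ((i + j)%N == n)%:R.
Definition Wtilde (W : 'M[E]_n.+1 -> algC) (g : 'M[E]_n.+1) : algC :=
  W (omega *m (invmx g)^T).

Definition Zeta (W : 'M[E]_n.+1 -> algC) (phi : 'rV[E]_n.+1 -> algC) : algC :=
  \sum_(C in rcosets NF HF)
     W (GLval (repr C)) * phi (row ord_max (GLval (repr C))).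

Definition fourier (ps : E -> algC) (phi : 'rV[E]_n.+1 -> algC)
  (y : 'rV[E]_n.+1) : algC :=
  \sum_(x : 'rV[E]_n.+1 | inFvec x) phi x * ps ((x *m y^T) 0 0).

Definition is_gamma (c : algC) : Prop :=
  forall W, whittaker_model W ->
  forall phi : 'rV[E]_n.+1 -> algC, phi 0 = 0 ->
    c * Zeta W phi = Zeta (Wtilde W) (fourier psi phi).

End Defs.

Definition nontrivial_additive_char (E : finFieldType) (q : nat) (psi : E -> algC) : Prop :=
  (forall x y, inF q x -> inF q y -> psi (x + y) = psi x * psi y) /\
  exists x, inF q x /\ psi x != 1.

(* Main.v *)
Require Import Defs.
From HB Require Import structures.
From Stdlib Require Import Lia.
From mathcomp Require Import zify.
From mathcomp Require Import all_boot all_order all_algebra all_fingroup all_solvable all_field all_character.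
Set Implicit Arguments. Unset Strict Implicit. Unset Printing Implicit Defensive.
Import GRing.Theory Num.Theory.
Local Open Scope ring_scope.


Section Theta.
Variables (E : finFieldType) (q : nat) (hE : #|E| = (q ^ 2)%N).
Local Notation theta := (@theta E).
Local Notation inF := (@inF E).

Lemma q_pow : exists p k, p \in [pchar E] /\ q = (p ^ k)%N.
Proof.
have [p pp pc] := finPcharP E.
have ab := fin_ring_pchar_abelem pc.
have := abelem_pgroup ab; rewrite /pgroup cardsT hE pnatX orbF.
case/p_natP => k ->; by exists p, k.
Qed.

Lemma thetaD x y : theta q (x + y) = theta q x + theta q y.
Proof.
have [p [k [pc ->]]] := q_pow; rewrite /theta.
elim: k => [|k IH]; first by rewrite !expr1.
rewrite expnSr !exprM IH.
have := pFrobenius_autD_comm pc (mulrC (x ^+ (p ^ k)) (y ^+ (p ^ k))).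
by rewrite !pFrobenius_autE.
Qed.

Lemma q_gt0 : (0 < q)%N.
Proof. case: q hE => // h; have := finNzRing_gt1 E; by rewrite h. Qed.

Lemma thetaM x y : theta q (x * y) = theta q x * theta q y.
Proof. by rewrite /theta exprMn. Qed.
Lemma theta0 : theta q 0 = 0.
Proof. by rewrite /theta expr0n; case: q q_gt0. Qed.
Lemma theta1 : theta q 1 = 1.
Proof. by rewrite /theta expr1n. Qed.
Lemma thetaN x : theta q (- x) = - theta q x.
Proof. by apply/eqP; rewrite -subr_eq0 opprK -thetaD addNr theta0. Qed.

Lemma inF0 : inF q 0. Proof. by rewrite /inF theta0. Qed.
Lemma inF1 : inF q 1. Proof. by rewrite /inF theta1. Qed.
Lemma inFD x y : inF q x -> inF q y -> inF q (x + y).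
Proof. by rewrite /inF thetaD => /eqP-> /eqP->. Qed.
Lemma inFM x y : inF q x -> inF q y -> inF q (x * y).
Proof. by rewrite /inF thetaM => /eqP-> /eqP->. Qed.
Lemma inFN x : inF q x -> inF q (- x).
Proof. by rewrite /inF thetaN => /eqP->. Qed.
Lemma inF_sum (I : finType) (P : pred I) (f : I -> E) :
  (forall i, P i -> inF q (f i)) -> inF q (\sum_(i | P i) f i).
Proof.
move=> h; elim/big_ind: _ => //; [exact: inF0 | exact: inFD].
Qed.
End Theta.

Section Grp.
Variables (E : finFieldType) (q : nat) (hE : #|E| = (q ^ 2)%N) (n : nat).
Local Notation inF := (@inF E q).
Local Notation G := {'GL_n.+1[E]}.

Lemma uuP (M : 'M[E]_n.+1) : reflect ((forall i : 'I_n.+1, M i i = 1) /\ (forall i j : 'I_n.+1, (j < i)%N -> M i j = 0))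
  (upper_unipotent M).
Proof.
apply: (iffP forallP) => [h|[h1 h2] i].
  split=> [i|i j lt].
    by have /forallP/(_ i) := h i; rewrite eqxx => /eqP.
  have /forallP/(_ j) := h i; case: eqP => [ij|_]; first by move: lt; rewrite ij ltnn.
  by rewrite lt => /eqP.
apply/forallP=> j; case: eqP => [<-|_]; first by rewrite h1.
by apply/implyP => lt; rewrite h2.
Qed.

Lemma inFmxP (M : 'M[E]_n.+1) : reflect (forall i j : 'I_n.+1, inF (M i j)) (inFmx q M).
Proof.
apply: (iffP forallP) => [h i j|h i]; first by have /forallP := h i; apply.
by apply/forallP.
Qed.

Lemma uu_mul (A B : 'M[E]_n.+1) : upper_unipotent A -> upper_unipotent B -> upper_unipotent (A *m B).
Proof.
move=> /uuP[a1 a2] /uuP[b1 b2]; apply/uuP; split=> [i|i j lt].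
  rewrite !mxE (bigD1 i) //= a1 b1 mul1r big1 ?addr0 // => k ki.
  case: (ltngtP k i) => [lt|lt|e]; first by rewrite a2 ?mul0r.
    by rewrite b2 ?mulr0.
  by move: ki; rewrite (val_inj e) eqxx.
rewrite !mxE big1 // => k _.
case: (ltnP k i) => [lt'|le]; first by rewrite a2 ?mul0r.
by rewrite b2 ?mulr0 //; apply: leq_trans lt le.
Qed.

Lemma inFmx_mul (A B : 'M[E]_n.+1) : inFmx q A -> inFmx q B -> inFmx q (A *m B).
Proof.
move=> /inFmxP a /inFmxP b; apply/inFmxP => i j; rewrite mxE.
by apply: inF_sum => // k _; apply: inFM.
Qed.

Lemma uu1 : upper_unipotent (1%:M : 'M[E]_n.+1).
Proof.
apply/uuP; split=> [i|i j lt]; first by rewrite mxE eqxx.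
by rewrite mxE; case: eqP => // e; move: lt; rewrite e ltnn.
Qed.

Lemma inFmx1 : inFmx q (1%:M : 'M[E]_n.+1).
Proof.
apply/inFmxP => i j; rewrite mxE; case: eqP => _ /=; [exact: inF1|exact: inF0].
Qed.

Lemma HF_gs : group_set (HF E q n).
Proof.
apply/group_setP; split; first by rewrite inE GL_1E inFmx1.
by move=> x y; rewrite !inE GL_MxE; apply: inFmx_mul.
Qed.

Lemma NF_gs : group_set (NF E q n).
Proof.
apply/group_setP; split; first by rewrite inE GL_1E inFmx1 uu1.
move=> x y; rewrite !inE GL_MxE => /andP[x1 x2] /andP[y1 y2].
by rewrite uu_mul ?inFmx_mul.
Qed.

Definition HFg := Group HF_gs.
Definition NFg := Group NF_gs.

Lemma NF_sub : NF E q n \subset HF E q n.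
Proof. by apply/subsetP => x; rewrite !inE => /andP[]. Qed.

Lemma toGLK (M : 'M[E]_n.+1) : M \in unitmx -> GLval (toGL M) = M.
Proof. by move=> u; rewrite /toGL val_insubd u. Qed.

Lemma toGLvK (g : G) : toGL (GLval g) = g.
Proof. exact: valKd. Qed.
End Grp.

Section Om.
Variables (E : finFieldType) (n : nat).
Local Notation om := (omega E n).

Lemma omega_ij (i j : 'I_n.+1) : om i j = (j == rev_ord i)%:R.
Proof.
rewrite mxE; congr (_%:R). case: eqP => h; case: eqP => h' //.
  by case: h'; apply/val_inj => /=; have := ltn_ord i; move: h; lia.
by case: h; rewrite h' /=; have := ltn_ord i; lia.
Qed.

Lemma omega_mull (A : 'M[E]_n.+1) i j : (om *m A) i j = A (rev_ord i) j.
Proof.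
rewrite mxE (bigD1 (rev_ord i)) //= omega_ij eqxx mul1r big1 ?addr0 // => k kn.
by rewrite omega_ij (negbTE kn) mul0r.
Qed.

Lemma omega_mulr (A : 'M[E]_n.+1) i j : (A *m om) i j = A i (rev_ord j).
Proof.
rewrite mxE (bigD1 (rev_ord j)) //= omega_ij rev_ordK eqxx mulr1 big1 ?addr0 // => k kn.
rewrite omega_ij; case: eqP => [e|_]; last by rewrite mulr0.
by move: kn; rewrite e rev_ordK eqxx.
Qed.

Lemma omega2 : om *m om = 1%:M.
Proof.
apply/matrixP => i j; rewrite omega_mull omega_ij !mxE.
by congr (_%:R); case: eqP => h; case: eqP => h' //; [case: h'; rewrite h rev_ordK | case: h; rewrite -h' rev_ordK].
Qed.

Lemma omega_unit : om \in unitmx.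
Proof. by case/mulmx1_unit: omega2. Qed.
End Om.

Section Main.
Variables (E : finFieldType) (q : nat) (hE : #|E| = (q ^ 2)%N) (n d : nat)
  (rG : mx_representation algC [set: {'GL_n.+1[E]}]%G d).
Hypothesis hnd : ~ distinguished q rG.
Local Notation G := {'GL_n.+1[E]}.
Local Notation HFg := (HFg hE n).
Local Notation NFg := (NFg hE n).

Definition omG : G := toGL (omega E n).
Definition tinv (h : G) : G := toGL ((invmx (GLval h))^T).

Lemma omG_val : GLval omG = omega E n.
Proof. exact: toGLK (omega_unit E n). Qed.

Lemma tinv_val h : GLval (tinv h) = (invmx (GLval h))^T.
Proof. apply: toGLK; rewrite unitmx_tr unitmx_inv. exact: (GL_unit h). Qed.

Lemma tinvK : involutive tinv.
Proof. by move=> h; apply/val_inj; rewrite /= !tinv_val trmx_inv trmxK invmxK. Qed.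

Lemma tinvM a b : tinv (a * b)%g = (tinv a * tinv b)%g.
Proof.
apply/val_inj; change (GLval (tinv (a * b)%g) = GLval (tinv a * tinv b)%g); rewrite GL_MxE !tinv_val -!GL_VxE invMg GL_MxE trmx_mul.
by rewrite !GL_VxE.
Qed.

Lemma tinv_HF1 h : h \in HF E q n -> tinv h \in HF E q n.
Proof.
move=> hh; have : (h^-1)%g \in HFg by rewrite groupV.
rewrite !inE tinv_val => /inFmxP hi; apply/inFmxP => i j.
by rewrite mxE -GL_VxE.
Qed.

Lemma tinv_HF h : (tinv h \in HF E q n) = (h \in HF E q n).
Proof.
apply/idP/idP; last exact: tinv_HF1.
by move/tinv_HF1; rewrite tinvK.
Qed.

Lemma rGM (a b : G) : rG (a * b)%g = rG a *m rG b.
Proof. by apply: repr_mxM; rewrite inE. Qed.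

Lemma Psum0 : \sum_(k in HF E q n) rG k = 0.
Proof.
set P := \sum_(k in _) _.
have inv : forall h, h \in HF E q n -> P *m rG h = P.
  move=> h hh; rewrite /P mulmx_suml.
  rewrite (reindex_inj (mulIg (h^-1)%g)) /=.
  apply: eq_big => [k|k _].
    have hv : (h^-1)%g \in HFg by rewrite groupV.
    exact: (groupMr k hv).
  by rewrite -rGM -mulgA mulVg mulg1.
apply/row_matrixP => i; rewrite row0.
case: (eqVneq (row i P) 0) => // nz; exfalso; apply: hnd; exists (row i P); split => // h hh.
by rewrite -row_mul inv.
Qed.

Lemma sum_tinv : \sum_(h in HF E q n) rG (tinv h) = 0.
Proof.
transitivity (\sum_(k in HF E q n) rG k); last exact: Psum0.
rewrite [RHS](reindex_inj (can_inj tinvK)) /=.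
by apply: eq_big => [k|k _]; rewrite ?tinv_HF.
Qed.
End Main.

Section Main2.
Variables (E : finFieldType) (q : nat) (hE : #|E| = (q ^ 2)%N) (n d : nat)
  (rG : mx_representation algC [set: {'GL_n.+1[E]}]%G d)
  (psi : E -> algC) (z : E) (psi0 : psi 0 = 1).
Local Notation G := {'GL_n.+1[E]}.
Local Notation HFg := (HFg hE n).
Local Notation NFg := (NFg hE n).
Local Notation omG := (omG E n).
Local Notation tinv := (@tinv E n).

Lemma omG2 : (omG * omG)%g = 1%g.
Proof.
apply/val_inj; change (GLval (omG * omG)%g = GLval 1%g).
by rewrite GL_MxE omG_val omega2.
Qed.

Lemma toGL_Wt (h : G) : toGL (omega E n *m (invmx (GLval h))^T) = (omG * tinv h)%g.
Proof. by rewrite -[RHS]toGLvK GL_MxE omG_val tinv_val. Qed.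

Lemma conj_NF (N : G) : N \in NF E q n ->
  upper_unipotent (GLval (omG * tinv N * omG)%g) /\ inFmx q (GLval (omG * tinv N * omG)%g).
Proof.
move=> hN; have : (N^-1)%g \in NFg by rewrite groupV.
rewrite inE => /andP[/uuP[u1 u2] /inFmxP f].
have e : forall i j, GLval (omG * tinv N * omG)%g i j = GLval (N^-1)%g (rev_ord j) (rev_ord i).
  by move=> i j; rewrite !GL_MxE omG_val tinv_val omega_mulr omega_mull mxE GL_VxE.
split.
  apply/uuP; split=> [i|i j lt]; rewrite e ?u1 // u2 //=.
  move: lt; case: i => [i hi]; case: j => [j hj] /=; move: hi hj; simpl; lia.
by apply/inFmxP => i j; rewrite e.
Qed.

Lemma psiE_F x : inF q x -> psiE q psi z x = 1.
Proof. by rewrite /psiE /inF => /eqP->; rewrite subrr mul0r psi0. Qed.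

Lemma Wt_inv (lam : 'rV[algC]_d) : whittaker_functional q psi z rG lam ->
  forall N h, N \in NF E q n ->
  lam *m rG (omG * tinv (N * h))%g = lam *m rG (omG * tinv h)%g.
Proof.
move=> [_ hw] N h hN.
have -> : (omG * tinv (N * h))%g = ((omG * tinv N * omG) * (omG * tinv h))%g.
  by rewrite tinvM !mulgA -(mulgA _ omG omG) omG2 mulg1.
have [uu fm] := conj_NF hN.
rewrite rGM mulmxA -[X in rG X](toGLvK) hw // psiE_F ?scale1r //.
rewrite /superdiag_sum; apply: inF_sum => // i _.
by move/inFmxP: fm; apply.
Qed.

Lemma coset_sum (f : G -> algC) :
  (forall N h, N \in NF E q n -> h \in HF E q n -> f (N * h)%g = f h) ->
  (#|NF E q n|%:R * \sum_(C in rcosets (NF E q n) (HF E q n)) f (repr C) =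
   \sum_(h in HF E q n) f h).
Proof.
move=> hf.
have hp := rcosets_partition (NF_sub E q n : NFg \subset HFg).
have hc : cover (rcosets (NF E q n) (HF E q n)) = HF E q n := cover_partition hp.
have tI : trivIset (rcosets (NF E q n) (HF E q n)) by case/and3P: hp.
rewrite -[in RHS]hc.
rewrite (big_trivIset _ tI) /= mulr_sumr; apply: eq_bigr => C /rcosetsP[x hx ->].
have hr : repr ((NF E q n :* x)%g) \in (NF E q n :* x)%g by apply: (mem_repr x); exact: (rcoset_refl NFg x).
have fx : forall y, y \in (NF E q n :* x)%g -> f y = f x.
  by move=> y /rcosetP[a ha ->]; apply: hf.
rewrite (eq_bigr (fun _ => f x)); last by move=> y hy; apply: fx.
by rewrite sumr_const card_rcoset (fx _ hr) mulr_natl.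
Qed.
End Main2.

Lemma row_nz (E : finFieldType) n (g : {'GL_n.+1[E]}) : row ord_max (GLval g) != 0.
Proof.
apply/eqP => h.
have := congr1 (fun M => M *m invmx (GLval g)) h.
rewrite /= -row_mul mulmxV; last first. exact: (GL_unit g).
rewrite mul0mx => /rowP/(_ ord_max); rewrite !mxE eqxx /= => /eqP.
by rewrite oner_eq0.
Qed.

Unset Implicit Arguments.
Theorem proposition3p3
  (E : finFieldType) (q : nat) (hE : #|E| = (q ^ 2)%N)
  (psi : E -> algC) (hpsi : nontrivial_additive_char q psi)
  (z : E) (hz : theta q z != z)
  (n d : nat) (rG : mx_representation algC [set: {'GL_n.+1[E]}]%G d)
  (hirr : mx_irreducible rG) (hcusp : cuspidal rG)
  (hnd : ~ distinguished q rG)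
  (c : algC) (hc : is_gamma q psi z rG c) :
  forall (phi : 'rV[E]_n.+1 -> algC) (W : 'M[E]_n.+1 -> algC),
    whittaker_model q psi z rG W ->
    c * Zeta q W phi = Zeta q (Wtilde W) (fourier q psi phi).
Proof.
move=> phi W hW.
pose del (x : 'rV[E]_n.+1) : algC := (x == 0)%:R.
pose phi1 x := phi x - phi 0 * del x.
have phi10 : phi1 0 = 0 by rewrite /phi1 /del eqxx mulr1 subrr.
have eA : Zeta q W phi = Zeta q W phi1.
  apply: eq_bigr => C _; rewrite /phi1 /del (negbTE (row_nz _)) mulr0 subr0 //.
have in0 : inFvec q (0 : 'rV[E]_n.+1).
  by apply/forallP => j; rewrite mxE; apply: inF0.
have eF : forall y, fourier q psi phi y = fourier q psi phi1 y + phi 0 * psi 0.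
  move=> y; rewrite /fourier /phi1.
  have sd : \sum_(i | inFvec q i) phi 0 * del i * psi ((i *m y^T) 0 0) = phi 0 * psi 0.
    rewrite (bigD1 0) //= big1 ?addr0; first by rewrite /del eqxx mulr1 mul0mx mxE.
    by move=> x /andP[_ nx]; rewrite /del (negbTE nx) mulr0 mul0r.
  under [in RHS]eq_bigr do rewrite mulrBl.
  by rewrite sumrB sd subrK.
have eB : Zeta q (Wtilde W) (fourier q psi phi) =
    Zeta q (Wtilde W) (fourier q psi phi1) +
    phi 0 * psi 0 * \sum_(C in rcosets (NF E q n) (HF E q n)) Wtilde W (GLval (repr C)).
  rewrite /Zeta [X in _ = _ + X]mulr_sumr -big_split /=; apply: eq_bigr => C _.
  by rewrite (eF (row ord_max (GLval (repr C)))) mulrDr [X in _ = _ + X]mulrC.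
rewrite eA eB (hc W hW phi1 phi10) -mulrA.
suff -> : psi 0 * \sum_(C in rcosets (NF E q n) (HF E q n)) Wtilde W (GLval (repr C)) = 0.
  by rewrite mulr0 addr0.
have p2 : psi 0 = psi 0 * psi 0 by rewrite -{1}(addr0 0); apply: hpsi.1; apply: inF0.
have [p0|p0] := eqVneq (psi 0) 0; first by rewrite p0 mul0r.
have p1 : psi 0 = 1.
  by apply: (mulfI p0); rewrite mulr1 -p2.
rewrite p1 mul1r.
have [lam [v [hlam hWv]]] := hW.
pose f (h : {'GL_n.+1[E]}) := (lam *m rG (omG E n * tinv h)%g *m v) 0 0.
have fW : forall h : {'GL_n.+1[E]}, Wtilde W (GLval h) = f h.
  by move=> h; rewrite /Wtilde hWv toGL_Wt.
have hinv : forall N h, N \in NF E q n -> h \in HF E q n -> f (N * h)%g = f h.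
  by move=> N h hN _; rewrite /f (Wt_inv hE p1 hlam h hN).
under eq_bigr do rewrite fW.
have := coset_sum hE hinv.
have -> : \sum_(h in HF E q n) f h = 0.
  rewrite /f.
  under eq_bigr do rewrite rGM mulmxA.
  rewrite -summxE -mulmx_suml -mulmx_sumr (sum_tinv hE hnd) mulmx0 mul0mx mxE //.
move/eqP; rewrite mulf_eq0 pnatr_eq0 => /orP[|/eqP //].
by have := cardG_gt0 (NFg hE n); rewrite lt0n => /negbTE ->.
Qed.
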